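(* Let $S=\{\rho_1=0<\rho_2<\cdots\}$ be an Arf numerical semigroup. Then for every positive integer $i$, $\beta(2\rho_i)=i$ and consequently $\#A[2\rho_i]=2i-1$.
   Context: A numerical semigroup is a submonoid $S$ of $(\mathbb{N}_0,+)$ with finite complement, with elements listed increasingly $\rho_1=0<\rho_2<\cdots$. $S$ is Arf if $\rho_i+\rho_j-\rho_k\in S$ for all positive integers $i\ge j\ge k$. For $\rho\in S$, $A[\rho]=\{p\in S:\ \rho-p\in S\}$ and $\beta(\rho)=\max\{j\ge1:\ \rho_1,\dots,\rho_j\in A[\rho]\ \text{and}\ 2\rho_j\le\rho\}$. *)

(* Defs.v *)
From mathcomp Require Import all_boot.
Set Implicit Arguments. Unset Strict Implicit. Unset Printing Implicit Defensive.

Definition numerical_semigroup (S : pred nat) : Prop :=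
  S 0 /\ (forall a b, S a -> S b -> S (a + b)) /\
  exists N, forall n, N <= n -> S n.

(* rho enumerates S increasingly, with paper's 1-based indexing:
   rho 1 = 0 < rho 2 < ... and {rho i | i >= 1} = S. *)
Definition enumerates (S : pred nat) (rho : nat -> nat) : Prop :=
  (forall i j, 1 <= i -> i < j -> rho i < rho j) /\
  (forall x, S x <-> exists2 i, 1 <= i & rho i = x).

Definition Arf (S : pred nat) (rho : nat -> nat) : Prop :=
  forall i j k, 1 <= k -> k <= j -> j <= i -> S (rho i + rho j - rho k).

Definition inA (S : pred nat) (r p : nat) : bool := [&& p <= r, S p & S (r - p)].

Definition Aset (S : pred nat) (r : nat) : {set 'I_r.+1} :=
  [set p : 'I_r.+1 | inA S r p].

Definition beta_cond (S : pred nat) (rho : nat -> nat) (r j : nat) : Prop :=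
  1 <= j /\ (forall k, 1 <= k -> k <= j -> inA S r (rho k)) /\ 2 * rho j <= r.

Definition beta_is (S : pred nat) (rho : nat -> nat) (r b : nat) : Prop :=
  beta_cond S rho r b /\ forall j, beta_cond S rho r j -> j <= b.

(* Main.v *)
Require Import Defs.
From mathcomp Require Import all_boot.
From mathcomp Require Import zify.

Lemma cardI n (P : pred nat) : #|[set p : 'I_n | P p]| = count P (iota 0 n).
Proof.
rewrite cardsE cardE /enum_mem -enumT size_filter.
rewrite -val_enum_ord count_map. apply: eq_count => x. by rewrite !inE.
Qed.

Lemma count_uniq_sub (s t : seq nat) :
  uniq s -> uniq t -> {subset s <= t} -> count (mem s) t = size s.
Proof.
move=> us ut sst; rewrite -size_filter.
apply: perm_size; apply: uniq_perm; first exact: filter_uniq.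
  exact: us.
move=> x; rewrite mem_filter; apply/andP/idP => [[]//|xs]; split => //.
exact: sst.
Qed.

Theorem mainTheorem5 (S : pred nat) (rho : nat -> nat) :
  numerical_semigroup S -> enumerates S rho -> Arf S rho ->
  forall i, 1 <= i ->
    beta_is S rho (2 * rho i) i /\ #|Aset S (2 * rho i)| = 2 * i - 1.
Proof.
move=> _ [mono enum] arf i i1.
have le_rho a b : 1 <= a -> 1 <= b -> (rho a <= rho b) = (a <= b).
  move=> a1 b1; case: (ltngtP a b) => h.
  - by apply/ltnW/mono.
  - by apply/negbTE; rewrite -ltnNge; apply: mono.
  - by rewrite h leqnn.
have Srho k : 1 <= k -> S (rho k) by move=> k1; apply/enum; exists k.
have Arfi k : 1 <= k -> k <= i -> S (2 * rho i - rho k).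
  move=> k1 ki; rewrite mulSn mul1n; exact: arf.
have inAk k : 1 <= k -> k <= i -> inA S (2 * rho i) (rho k).
  move=> k1 ki; apply/and3P; split; last exact: Arfi.
  - have := le_rho k i k1 i1; rewrite ki; lia.
  - exact: Srho.
split.
  split.
    split; first exact: i1.
    split; last exact: leqnn.
    move=> k k1 ki; exact: inAk.
  move=> j [j1 [_ hj]].
  rewrite -(le_rho j i j1 i1); lia.
rewrite /Aset cardI.
set r := 2 * rho i.
set s := map rho (iota 1 i) ++ map (fun k => r - rho k) (iota 1 i.-1).
have memA p : p <= r -> inA S r p = (p \in s).
  move=> pr; apply/idP/idP.
  - case/and3P => _ Sp Srp.
    rewrite mem_cat; apply/orP.
    case: (leqP p (rho i)) => hp.
    + left; have [k k1 ek] := (enum p).1 Sp.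
      rewrite -ek; apply: map_f; rewrite mem_iota.
      have := le_rho k i k1 i1; lia.
    + right; have [k k1 ek] := (enum _).1 Srp.
      have -> : p = r - rho k by lia.
      apply: map_f; rewrite mem_iota.
      have := le_rho i k i1 k1; lia.
  - rewrite mem_cat => /orP[] /mapP[k]; rewrite mem_iota => /andP[k1 ki] ->.
    + apply: inAk; lia.
    + apply/and3P; split; first lia.
      * apply: Arfi; lia.
      * have := le_rho k i k1 i1; have -> : r - (r - rho k) = rho k.
          have := le_rho k i k1 i1; rewrite /r; lia.
        by move=> _; apply: Srho.
have -> : count (inA S r) (iota 0 r.+1) = count (mem s) (iota 0 r.+1).
  apply: eq_in_count => p; rewrite mem_iota => /andP[_ pr].
  by rewrite /= memA //; lia.
have -> : 2 * i - 1 = size s by rewrite size_cat !size_map !size_iota; lia.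
apply: count_uniq_sub; [|exact: iota_uniq|]; last first.
- move=> p ps; rewrite mem_iota /=.
  move: ps; rewrite mem_cat => /orP[] /mapP[k]; rewrite mem_iota => /andP[k1 ki] ->.
  + have := le_rho k i k1 i1; rewrite /r; lia.
  + lia.
rewrite cat_uniq; apply/and3P; split.
- rewrite map_inj_in_uniq ?iota_uniq // => a b; rewrite !mem_iota => /andP[a1 _] /andP[b1 _] e.
  apply/eqP; rewrite eqn_leq -(le_rho a b a1 b1) -(le_rho b a b1 a1) e leqnn //.
- apply/hasPn => p /mapP[k]; rewrite mem_iota => /andP[k1 ki] ->.
  apply/mapP => [[m]]; rewrite mem_iota => /andP[m1 mi] e.
  have hk : rho k < rho i by apply: mono => //; lia.
  have hm : rho m <= rho i by rewrite le_rho //; lia.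
  move: e; rewrite /r; lia.
- rewrite map_inj_in_uniq ?iota_uniq // => a b; rewrite !mem_iota => /andP[a1 ai] /andP[b1 bi] e.
  have ha : rho a <= rho i by rewrite le_rho //; lia.
  have hb : rho b <= rho i by rewrite le_rho //; lia.
  have e' : rho a = rho b by move: e; rewrite /r; lia.
  apply/eqP; rewrite eqn_leq -(le_rho a b a1 b1) -(le_rho b a b1 a1) e' leqnn //.
Qed.
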